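(* Consider the planar system $$\frac{dC}{dt} = 1 + m_1\frac{CL}{1+L} - m_2\frac{CL}{1+m_3C} - m_4C,\qquad \frac{dL}{dt} = L - m_5 CL,$$ with positive parameters $m_1,\dots,m_5$, and its equilibria $E_1=(1/m_4,0)$, $E_2=(1/m_5,L_2)$, $E_3=(1/m_5,L_3)$, where $L_2=\frac{-b-\sqrt{\Delta}}{2a}$, $L_3=\frac{-b+\sqrt{\Delta}}{2a}$ with $a=-\frac{m_2}{1+m_3/m_5}$, $b=m_1+m_5-m_4-\frac{m_2}{1+m_3/m_5}$, $c=m_5-m_4$, $\Delta=b^2-4ac$. The equilibria $E_1$, $E_2$ and $E_3$ undergo a subcritical pitchfork bifurcation when $m_5=m_4$ and $m_2=m_1(1+m_3/m_5)$.
   Context: Nondimensional model of CAR-T cells $C$ and lymphoma cells $L$; $E_1$ is the tumor-free equilibrium and $E_2,E_3$ are the coexistence equilibria with $C=1/m_5$. *)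

(* Defs.v *)
From Stdlib Require Import Reals.
From Coquelicot Require Import Coquelicot.
Open Scope R_scope.

Definition fC (m1 m2 m3 m4 : R) (C L : R) : R :=
  1 + m1 * C * L / (1 + L) - m2 * C * L / (1 + m3 * C) - m4 * C.
Definition fL (m5 : R) (C L : R) : R := L - m5 * C * L.

(* Coefficients of the quadratic for the L-coordinate of Eq2, Eq3. *)
Definition qa (m2 m3 m5 : R) : R := - (m2 / (1 + m3 / m5)).
Definition qb (m1 m2 m3 m4 m5 : R) : R := m1 + m5 - m4 - m2 / (1 + m3 / m5).
Definition qc (m4 m5 : R) : R := m5 - m4.
Definition qDelta (m1 m2 m3 m4 m5 : R) : R :=
  (qb m1 m2 m3 m4 m5)^2 - 4 * qa m2 m3 m5 * qc m4 m5.
Definition L2 (m1 m2 m3 m4 m5 : R) : R :=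
  (- qb m1 m2 m3 m4 m5 - sqrt (qDelta m1 m2 m3 m4 m5)) / (2 * qa m2 m3 m5).
Definition L3 (m1 m2 m3 m4 m5 : R) : R :=
  (- qb m1 m2 m3 m4 m5 + sqrt (qDelta m1 m2 m3 m4 m5)) / (2 * qa m2 m3 m5).
Definition Eq1 (m4 : R) : R * R := (1 / m4, 0).
Definition Eq2 (m1 m2 m3 m4 m5 : R) : R * R := (1 / m5, L2 m1 m2 m3 m4 m5).
Definition Eq3 (m1 m2 m3 m4 m5 : R) : R * R := (1 / m5, L3 m1 m2 m3 m4 m5).

Definition is_equil (F1 F2 : R -> R -> R -> R) (p x y : R) : Prop :=
  F1 p x y = 0 /\ F2 p x y = 0.

Definition J11 (F1 : R -> R -> R -> R) p x y := Derive (fun u => F1 p u y) x.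
Definition J12 (F1 : R -> R -> R -> R) p x y := Derive (fun v => F1 p x v) y.
Definition J21 (F2 : R -> R -> R -> R) p x y := Derive (fun u => F2 p u y) x.
Definition J22 (F2 : R -> R -> R -> R) p x y := Derive (fun v => F2 p x v) y.
Definition jac_tr F1 F2 p x y := J11 F1 p x y + J22 F2 p x y.
Definition jac_det F1 F2 p x y :=
  J11 F1 p x y * J22 F2 p x y - J12 F1 p x y * J21 F2 p x y.

(* Linear stability of an equilibrium of a planar system:
   both eigenvalues of the 2x2 Jacobian have negative real part
   (for 2x2 matrices: trace < 0 and determinant > 0). *)
Definition lin_stable F1 F2 p x y : Prop :=
  jac_tr F1 F2 p x y < 0 /\ 0 < jac_det F1 F2 p x y.
(* Linear instability: some eigenvalue has positive real part
   (for 2x2 matrices: determinant < 0 or trace > 0). *)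
Definition lin_unstable F1 F2 p x y : Prop :=
  jac_det F1 F2 p x y < 0 \/ 0 < jac_tr F1 F2 p x y.

Definition in_box (r x0 y0 x y : R) : Prop := Rabs (x - x0) < r /\ Rabs (y - y0) < r.

Definition subcritical_pitchfork (F1 F2 : R -> R -> R -> R) (p0 x0 y0 : R) : Prop :=
  is_equil F1 F2 p0 x0 y0 /\
  exists s r d : R, (s = 1 \/ s = -1) /\ 0 < r /\ 0 < d /\
   (forall p, 0 < s * (p - p0) < d ->
      exists a0 b0 a1 b1 a2 b2 : R,
        (a0, b0) <> (a1, b1) /\ (a0, b0) <> (a2, b2) /\ (a1, b1) <> (a2, b2) /\
        in_box r x0 y0 a0 b0 /\ in_box r x0 y0 a1 b1 /\ in_box r x0 y0 a2 b2 /\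
        is_equil F1 F2 p a0 b0 /\ is_equil F1 F2 p a1 b1 /\ is_equil F1 F2 p a2 b2 /\
        (forall x y, in_box r x0 y0 x y -> is_equil F1 F2 p x y ->
           (x, y) = (a0, b0) \/ (x, y) = (a1, b1) \/ (x, y) = (a2, b2)) /\
        lin_stable F1 F2 p a0 b0 /\ lin_unstable F1 F2 p a1 b1 /\
        lin_unstable F1 F2 p a2 b2) /\
   (forall p, 0 < - s * (p - p0) < d ->
      exists a b : R, in_box r x0 y0 a b /\ is_equil F1 F2 p a b /\
        (forall x y, in_box r x0 y0 x y -> is_equil F1 F2 p x y -> x = a /\ y = b) /\
        lin_unstable F1 F2 p a b) /\
   (forall e, 0 < e -> exists d', 0 < d' /\ forall p x y,
      0 < Rabs (p - p0) < d' -> in_box r x0 y0 x y -> is_equil F1 F2 p x y ->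
      in_box e x0 y0 x y).

(* Main.v *)
Require Import Defs.
From Stdlib Require Import Reals Lra Psatz.
From Coquelicot Require Import Coquelicot.
Open Scope R_scope.

Lemma fC_C (m1 m2 m3 m4 p L : R) : 0 < p -> 0 < m3 -> 1 + L <> 0 ->
  fC m1 m2 m3 m4 (1/p) L * (p*(1+L)) = qa m2 m3 p * L^2 + qb m1 m2 m3 m4 p * L + qc m4 p.
Proof. intros. assert (0 < m3/p) by (apply Rdiv_lt_0_compat; lra).
unfold fC, qa, qb, qc. field. repeat split; try lra.
Qed.

Lemma fC_L0 m1 m2 m3 m4 C : fC m1 m2 m3 m4 C 0 = 1 - m4*C.
Proof. unfold fC, Rdiv. ring. Qed.

Lemma k_eq m1 m2 m3 m4 p : 0 < m3 -> 0 < m4 -> 0 < p -> m2 = m1*(1+m3/m4) ->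
  m2/(1+m3/p) = m1 + (m1/m4)*(m3/(p+m3))*(p - m4).
Proof. intros. subst. assert (0 < m3/p) by (apply Rdiv_lt_0_compat; lra). field. repeat split; lra. Qed.

Lemma D11_0 m1 m2 m3 m4 x : Derive (fun u => fC m1 m2 m3 m4 u 0) x = - m4.
Proof. rewrite (Derive_ext _ (fun u => 1 - m4*u)) by (intro; apply fC_L0).
apply is_derive_unique. auto_derive; auto; ring. Qed.

Lemma D12 m1 m2 m3 m4 x y : 1+y <> 0 -> 1 + m3*x <> 0 ->
  Derive (fun v => fC m1 m2 m3 m4 x v) y = x*(m1/(1+y)^2 - m2/(1+m3*x)).
Proof. intros. apply is_derive_unique; unfold fC; auto_derive.
 - auto.
 - field. auto.
Qed.

Lemma D21 p x y : Derive (fun u => fL p u y) x = -p*y.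
Proof. apply is_derive_unique; unfold fL; auto_derive; auto; ring. Qed.
Lemma D22 p x y : Derive (fun v => fL p x v) y = 1 - p*x.
Proof. apply is_derive_unique; unfold fL; auto_derive; auto; ring. Qed.

Lemma quad_roots a b c y : a <> 0 -> 0 <= b^2 - 4*a*c ->
  (a*y^2+b*y+c = 0 <-> y = (-b - sqrt (b^2-4*a*c))/(2*a) \/ y = (-b + sqrt (b^2-4*a*c))/(2*a)).
Proof. intros Ha HD. set (s := sqrt (b^2-4*a*c)).
assert (Hs : s*s = b^2-4*a*c) by (apply sqrt_sqrt; auto).
split.
- intro H. assert (E: (2*a*y+b - s)*(2*a*y+b+s) = 0).
  { replace ((2*a*y+b - s)*(2*a*y+b+s)) with (4*a*(a*y^2+b*y+c) + (b^2-4*a*c) - s*s) by ring.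
    rewrite H, Hs. ring. }
  apply Rmult_integral in E. destruct E as [E|E].
  + right. field_simplify_eq; auto. lra.
  + left. field_simplify_eq; auto. lra.
- intros [->| ->]; field_simplify_eq; auto; unfold Rdiv; try lra;
  replace (s^2) with (s*s) by ring; rewrite Hs; ring.
Qed.
Lemma g_bounds m1 m3 m4 p : 0 < m1 -> 0 < m3 -> 0 < m4 -> 0 < p ->
  0 < (m1/m4)*(m3/(p+m3)) < m1/m4.
Proof. intros. assert (0 < m1/m4) by (apply Rdiv_lt_0_compat; lra).
assert (0 < m3/(p+m3)) by (apply Rdiv_lt_0_compat; lra).
assert (m3/(p+m3) < 1). { apply Rmult_lt_reg_r with (p+m3); [lra|].
  unfold Rdiv. rewrite Rmult_assoc, Rinv_l; lra. }
split; nra. Qed.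

Lemma quad_form m1 m2 m3 m4 p y : 0 < m3 -> 0 < m4 -> 0 < p -> m2 = m1*(1+m3/m4) ->
  qa m2 m3 p*y^2 + qb m1 m2 m3 m4 p*y + qc m4 p = 0 ->
  (m1 + (m1/m4)*(m3/(p+m3))*(p-m4))*y^2 = (p-m4)*(1+(1-(m1/m4)*(m3/(p+m3)))*y).
Proof. intros. unfold qa, qb, qc in *. rewrite (k_eq m1 m2 m3 m4 p) in H3 by auto.
set (g := (m1/m4)*(m3/(p+m3))) in *. lra. Qed.

Lemma small_root K M rho E u : 0<K -> 0<rho -> 0<=M -> 0 <= u -> 0 <= E ->
  K*u^2 <= E*(1+M*u) -> E*(1+M*rho) < K*rho^2 -> u < rho.
Proof. intros. destruct (Rlt_or_le u rho) as [h|h]; auto. exfalso.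
assert (h1: E*M*rho < K*rho^2) by nra.
assert (h2: E*M < K*rho).
{ apply Rmult_lt_reg_r with rho; auto. nra. }
assert (h3: 0 <= (u-rho)*(K*(u+rho) - E*M)) by (apply Rmult_le_pos; nra).
nra. Qed.

Definition dd m1 m4 rho := Rmin (m4/2) (Rmin (rho*m4^2/2) (m1*rho^2/3)).

Lemma dd_pos m1 m4 rho : 0 < m1 -> 0 < m4 -> 0 < rho -> 0 < dd m1 m4 rho.
Proof. intros. unfold dd.
 assert (0 < rho*m4^2) by (apply Rmult_lt_0_compat; nra).
 assert (0 < m1*rho^2) by (apply Rmult_lt_0_compat; nra).
 repeat apply Rmin_glb_lt; lra. Qed.

Lemma near m1 m2 m3 m4 p rho : 0 < m1 -> 0 < m3 -> 0 < m4 -> m2 = m1*(1+m3/m4) ->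
  0 < rho -> (1+m1/m4)*rho <= 1/2 -> Rabs (p - m4) < dd m1 m4 rho ->
  0 < p /\ Rabs (1/p - 1/m4) < rho /\
  (forall y, qa m2 m3 p*y^2 + qb m1 m2 m3 m4 p*y + qc m4 p = 0 -> Rabs y < rho).
Proof. intros H1 H3 H4 Hm2 Hr HM Hp. unfold dd in Hp.
assert (A1 : Rabs (p-m4) < m4/2) by (eapply Rlt_le_trans; [exact Hp| apply Rmin_l]).
assert (A2 : Rabs (p-m4) < rho*m4^2/2) by (eapply Rlt_le_trans; [exact Hp| eapply Rle_trans; [apply Rmin_r|apply Rmin_l]]).
assert (A3 : Rabs (p-m4) < m1*rho^2/3) by (eapply Rlt_le_trans; [exact Hp| eapply Rle_trans; [apply Rmin_r|apply Rmin_r]]).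
assert (B := Rle_abs (p-m4)). assert (B' := Rabs_pos (p-m4)).
assert (B'' : -(p-m4) <= Rabs (p-m4)) by (rewrite <- Rabs_Ropp; apply Rle_abs).
assert (Pp : 0 < p) by lra.
split; [exact Pp|]. split.
- replace (1/p - 1/m4) with ((m4 - p) * /(p*m4)) by (field; lra).
  rewrite Rabs_mult, Rabs_inv, (Rabs_pos_eq (p*m4)) by nra.
  rewrite Rabs_minus_sym.
  apply Rmult_lt_reg_r with (p*m4); [nra|].
  rewrite Rmult_assoc, Rinv_l by nra. nra.
- intros y Hy. apply quad_form in Hy; auto.
  destruct (g_bounds m1 m3 m4 p) as [g1 g2]; auto.
  set (g := (m1/m4)*(m3/(p+m3))) in *. set (e := p - m4) in *.
  assert (M0 : 0 < m1/m4) by (apply Rdiv_lt_0_compat; lra).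
  assert (Ge : Rabs (g*e) <= m1/2).
  { rewrite Rabs_mult, (Rabs_pos_eq g) by lra.
    apply Rle_trans with (m1/m4 * (m4/2)); [nra|]. right; field; lra. }
  assert (Ge2 := Rle_abs (g*e)). assert (Ge3 : -(g*e) <= Rabs (g*e)) by (rewrite <- Rabs_Ropp; apply Rle_abs).
  assert (K : m1/2 * y^2 <= (m1 + g*e)*y^2) by nra.
  assert (X : e*(1+(1-g)*y) <= Rabs e * (1 + (1+m1/m4)*Rabs y)).
  { eapply Rle_trans; [apply Rle_abs|]. rewrite Rabs_mult.
    apply Rmult_le_compat_l; [apply Rabs_pos|].
    eapply Rle_trans; [apply Rabs_triang|]. rewrite Rabs_R1, Rabs_mult.
    apply Rplus_le_compat_l. apply Rmult_le_compat_r; [apply Rabs_pos|].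
    apply Rabs_le. lra. }
  assert (PA := pow2_abs y).
  apply (small_root (m1/2) (1+m1/m4) rho (Rabs e)); try lra; try apply Rabs_pos.
  - rewrite PA. lra.
  - assert (Rabs e * ((1+m1/m4)*rho) <= Rabs e * (1/2)) by (apply Rmult_le_compat_l; [apply Rabs_pos| exact HM]).
    lra.
Qed.

Definition F1 m1 m2 m3 m4 := fun (m5 C L : R) => fC m1 m2 m3 m4 C L.
Definition F2 := fun (m5 C L : R) => fL m5 C L.

Lemma uniq_equil m1 m2 m3 m4 p x y : 0 < p -> 0 < m3 -> 0 < m4 -> Rabs y < 1/2 ->
  is_equil (fun m5 C L => fC m1 m2 m3 m4 C L) (fun m5 C L => fL m5 C L) p x y ->
  (x = 1/m4 /\ y = 0) \/ (x = 1/p /\ qa m2 m3 p*y^2 + qb m1 m2 m3 m4 p*y + qc m4 p = 0).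
Proof. intros Hp H3 H4 Hy [E1 E2]. cbv beta in E1, E2.
assert (Y : 1 + y > 0) by (assert (h:=Rle_abs (-y)); rewrite Rabs_Ropp in h; lra).
unfold fL in E2. assert (E : y * (1 - p*x) = 0) by lra.
apply Rmult_integral in E. destruct E as [E|E].
- left. subst y. rewrite fC_L0 in E1. split; auto. field_simplify_eq; lra.
- right. assert (Hx : x = 1/p) by (field_simplify_eq; lra). split; auto.
  subst x. rewrite <- (fC_C m1 m2 m3 m4 p y) by lra. rewrite E1. ring.
Qed.

Lemma root_equil m1 m2 m3 m4 p L : 0 < p -> 0 < m3 -> 1 + L > 0 ->
  qa m2 m3 p*L^2 + qb m1 m2 m3 m4 p*L + qc m4 p = 0 ->
  is_equil (fun m5 C L => fC m1 m2 m3 m4 C L) (fun m5 C L => fL m5 C L) p (1/p) L.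
Proof. intros. split; cbv beta.
- rewrite <- (fC_C m1 m2 m3 m4 p L) in H2 by lra.
  apply Rmult_integral in H2. destruct H2; auto. exfalso. nra.
- unfold fL. field. lra.
Qed.

Lemma unstable_E23 m1 m2 m3 m4 p L : 0 < m2 -> 0 < p -> 0 < m3 -> 1 + L > 0 -> m4 < p ->
  qa m2 m3 p*L^2 + qb m1 m2 m3 m4 p*L + qc m4 p = 0 ->
  lin_unstable (fun m5 C L => fC m1 m2 m3 m4 C L) (fun m5 C L => fL m5 C L) p (1/p) L.
Proof. intros H2 Hp H3 HL Hpm Hq. left. unfold jac_det, J11, J12, J21, J22. cbv beta.
assert (0 < m3/p) by (apply Rdiv_lt_0_compat; lra).
rewrite D12, D21, D22 by (try lra; unfold Rdiv in *; nra).
set (J := Derive _ _).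
unfold qa, qb, qc in Hq. set (k := m2/(1+m3/p)) in *.
assert (kpos : 0 < k) by (apply Rdiv_lt_0_compat; lra).
assert (Hm : m1 * L = (k*L - (p-m4))*(1+L)) by lra.
replace (J * (1 - p * (1 / p)) - 1 / p * (m1 / (1 + L) ^ 2 - m2 / (1 + m3 * (1 / p))) * (- p * L))
  with ((m1*L)/(1+L)^2 - k*L) by (unfold k; field; lra).
rewrite Hm. replace ((k * L - (p - m4)) * (1 + L) / (1 + L) ^ 2 - k * L) with
  (-((p-m4) + k*L^2) / (1+L)) by (field; lra).
unfold Rdiv. assert (0 < /(1+L)) by (apply Rinv_0_lt_compat; lra).
assert (0 <= k*L^2) by (apply Rmult_le_pos; [lra| apply pow2_ge_0]).
assert (0 < ((p-m4)+k*L^2) * /(1+L)) by (apply Rmult_lt_0_compat; lra). lra.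
Qed.

Lemma E1_jac m1 m2 m3 m4 p : 0 < m4 ->
  jac_tr (fun m5 C L => fC m1 m2 m3 m4 C L) (fun m5 C L => fL m5 C L) p (1/m4) 0 = -m4 + (1 - p*(1/m4)) /\
  jac_det (fun m5 C L => fC m1 m2 m3 m4 C L) (fun m5 C L => fL m5 C L) p (1/m4) 0 = p - m4.
Proof. intros. unfold jac_tr, jac_det, J11, J12, J21, J22; cbv beta.
rewrite D11_0, D21, D22. set (J := Derive _ _). split. reflexivity. field. lra. Qed.

Definition rr m1 m4 := /(2*(1+m1/m4)).

Lemma rr_facts m1 m4 : 0 < m1 -> 0 < m4 -> 0 < rr m1 m4 /\ (1+m1/m4) * rr m1 m4 <= 1/2 /\ rr m1 m4 < 1/2.
Proof. intros. assert (0 < m1/m4) by (apply Rdiv_lt_0_compat; lra). unfold rr.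
split; [apply Rinv_0_lt_compat; lra|]. split.
- right. field. lra.
- apply Rmult_lt_reg_l with (2*(1+m1/m4)); [lra|]. rewrite Rinv_r by lra. lra.
Qed.

Lemma noroot m1 m2 m3 m4 p y : 0 < m1 -> 0 < m3 -> 0 < m4 -> m2 = m1*(1+m3/m4) ->
  0 < p -> p < m4 -> (1+m1/m4) * Rabs y <= 1/2 ->
  qa m2 m3 p*y^2 + qb m1 m2 m3 m4 p*y + qc m4 p = 0 -> False.
Proof. intros H1 H3 H4 Hm2 Hp Hpm Hy Hq. apply quad_form in Hq; auto.
destruct (g_bounds m1 m3 m4 p) as [g1 g2]; auto.
set (g := (m1/m4)*(m3/(p+m3))) in *. set (e := p - m4) in *.
assert (0 < m1 + g*e). { assert (g*m4 < m1). { apply Rmult_lt_reg_r with (/m4).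
  apply Rinv_0_lt_compat; lra. rewrite Rmult_assoc, Rinv_r by lra. lra. } unfold e. nra. }
assert (Rabs ((1-g)*y) <= 1/2).
{ rewrite Rabs_mult. eapply Rle_trans; [|exact Hy]. apply Rmult_le_compat_r; [apply Rabs_pos|].
  apply Rabs_le. assert (0 < m1/m4) by (apply Rdiv_lt_0_compat; lra). lra. }
assert (h := Rle_abs (-((1-g)*y))). rewrite Rabs_Ropp in h.
assert (0 <= (m1+g*e)*y^2) by (apply Rmult_le_pos; [lra|apply pow2_ge_0]).
assert (e*(1+(1-g)*y) < 0) by (apply Rmult_neg_pos; unfold e; lra).
lra. Qed.

Lemma Delta_eq m1 m2 m3 m4 p : qDelta m1 m2 m3 m4 p = (qb m1 m2 m3 m4 p)^2 + 4*(m2/(1+m3/p))*(p-m4).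
Proof. unfold qDelta, qa, qc. ring. Qed.

Lemma branch m1 m2 m3 m4 p : 0 < m1 -> 0 < m2 -> 0 < m3 -> 0 < m4 -> m2 = m1*(1+m3/m4) ->
  m4 < p -> Rabs (p - m4) < dd m1 m4 (rr m1 m4) ->
  0 < qDelta m1 m2 m3 m4 p /\
  qa m2 m3 p*(L2 m1 m2 m3 m4 p)^2 + qb m1 m2 m3 m4 p*(L2 m1 m2 m3 m4 p) + qc m4 p = 0 /\
  qa m2 m3 p*(L3 m1 m2 m3 m4 p)^2 + qb m1 m2 m3 m4 p*(L3 m1 m2 m3 m4 p) + qc m4 p = 0 /\
  Rabs (L2 m1 m2 m3 m4 p) < rr m1 m4 /\ Rabs (L3 m1 m2 m3 m4 p) < rr m1 m4 /\
  L2 m1 m2 m3 m4 p <> L3 m1 m2 m3 m4 p /\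
  (forall y, qa m2 m3 p*y^2 + qb m1 m2 m3 m4 p*y + qc m4 p = 0 ->
     y = L2 m1 m2 m3 m4 p \/ y = L3 m1 m2 m3 m4 p).
Proof. intros H1 H2 H3 H4 Hm2 Hpm Hd.
destruct (rr_facts m1 m4) as [r1 [r2 r3]]; auto.
destruct (near m1 m2 m3 m4 p (rr m1 m4)) as [Pp [_ Hs]]; auto.
assert (0 < m3/p) by (apply Rdiv_lt_0_compat; lra).
assert (kp : 0 < m2/(1+m3/p)) by (apply Rdiv_lt_0_compat; lra).
assert (DP : 0 < qDelta m1 m2 m3 m4 p).
{ rewrite Delta_eq. assert (0 <= (qb m1 m2 m3 m4 p)^2) by apply pow2_ge_0.
  assert (0 < m2/(1+m3/p)*(p-m4)) by (apply Rmult_lt_0_compat; lra). lra. }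
assert (qa0 : qa m2 m3 p <> 0) by (unfold qa; lra).
assert (QR := fun y => quad_roots (qa m2 m3 p) (qb m1 m2 m3 m4 p) (qc m4 p) y qa0).
unfold qDelta in DP. 
assert (R2 : qa m2 m3 p*(L2 m1 m2 m3 m4 p)^2 + qb m1 m2 m3 m4 p*(L2 m1 m2 m3 m4 p) + qc m4 p = 0).
{ apply QR; [lra|]. left. reflexivity. }
assert (R3 : qa m2 m3 p*(L3 m1 m2 m3 m4 p)^2 + qb m1 m2 m3 m4 p*(L3 m1 m2 m3 m4 p) + qc m4 p = 0).
{ apply QR; [lra|]. right. reflexivity. }
split; [exact DP|]. split; [exact R2|]. split; [exact R3|].
split; [apply Hs; exact R2|]. split; [apply Hs; exact R3|]. split.
- unfold L2, L3. intro E. assert (sp : 0 < sqrt (qDelta m1 m2 m3 m4 p)) by (apply sqrt_lt_R0; exact DP).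
  unfold qDelta in sp. 
  assert (E' : (- qb m1 m2 m3 m4 p - sqrt (qb m1 m2 m3 m4 p ^ 2 - 4 * qa m2 m3 p * qc m4 p)) =
           (- qb m1 m2 m3 m4 p + sqrt (qb m1 m2 m3 m4 p ^ 2 - 4 * qa m2 m3 p * qc m4 p))).
  { apply (f_equal (fun t => t * (2*qa m2 m3 p))) in E. unfold qDelta in E.
    field_simplify in E; auto. }
  lra.
- intros y Hy. apply QR in Hy; [|lra]. exact Hy.
Qed.

Lemma E1_equil m1 m2 m3 m4 p : 0 < m4 ->
  is_equil (fun m5 C L => fC m1 m2 m3 m4 C L) (fun m5 C L => fL m5 C L) p (1/m4) 0.
Proof. intros. split; cbv beta. rewrite fC_L0; field; lra. unfold fL; ring. Qed.

Lemma box0 r a : 0 < r -> in_box r a 0 a 0.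
Proof. intros. unfold in_box. replace (a - a) with 0 by ring. replace (0-0) with 0 by ring.
rewrite Rabs_R0. lra. Qed.

Theorem theorem7 (m1 m2 m3 m4 : R) :
  0 < m1 -> 0 < m2 -> 0 < m3 -> 0 < m4 ->
  m2 = m1 * (1 + m3 / m4) ->
  Eq2 m1 m2 m3 m4 m4 = Eq1 m4 /\ Eq3 m1 m2 m3 m4 m4 = Eq1 m4 /\
  subcritical_pitchfork (fun m5 C L => fC m1 m2 m3 m4 C L)
                        (fun m5 C L => fL m5 C L) m4 (1 / m4) 0 /\
  (exists d, 0 < d /\ forall m5, m4 < m5 < m4 + d ->
     0 < qDelta m1 m2 m3 m4 m5 /\
     is_equil (fun m5 C L => fC m1 m2 m3 m4 C L) (fun m5 C L => fL m5 C L)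
              m5 (fst (Eq2 m1 m2 m3 m4 m5)) (snd (Eq2 m1 m2 m3 m4 m5)) /\
     is_equil (fun m5 C L => fC m1 m2 m3 m4 C L) (fun m5 C L => fL m5 C L)
              m5 (fst (Eq3 m1 m2 m3 m4 m5)) (snd (Eq3 m1 m2 m3 m4 m5))).
Proof.
intros H1 H2 H3 H4 Hm2.
destruct (rr_facts m1 m4) as [r1 [r2 r3]]; auto.
assert (Mp : 0 < m1/m4) by (apply Rdiv_lt_0_compat; lra).
assert (Hk0 : m2/(1+m3/m4) = m1).
{ subst m2. assert (0 < m3/m4) by (apply Rdiv_lt_0_compat; lra). field. split; lra. }
assert (qb0 : qb m1 m2 m3 m4 m4 = 0) by (unfold qb; rewrite Hk0; ring).
assert (qD0 : qDelta m1 m2 m3 m4 m4 = 0) by (unfold qDelta, qc; rewrite qb0; ring).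
assert (qa0 : qa m2 m3 m4 = -m1) by (unfold qa; rewrite Hk0; ring).
split.
{ unfold Eq2, Eq1, L2. rewrite qb0, qD0, qa0, sqrt_0. f_equal. field. lra. }
split.
{ unfold Eq3, Eq1, L3. rewrite qb0, qD0, qa0, sqrt_0. f_equal. field. lra. }
split.
- split; [apply E1_equil; lra|].
  exists 1, (rr m1 m4), (dd m1 m4 (rr m1 m4)).
  split; [left; reflexivity|]. split; [lra|]. split; [apply dd_pos; auto|].
  split; [|split].
  + intros p Hp. assert (Hpm : m4 < p) by lra.
    assert (Hd : Rabs (p-m4) < dd m1 m4 (rr m1 m4)) by (rewrite Rabs_pos_eq; lra).
    destruct (near m1 m2 m3 m4 p (rr m1 m4)) as [Pp [Hx _]]; auto.
    destruct (branch m1 m2 m3 m4 p) as [DP [R2 [R3 [A2 [A3 [N23 U]]]]]]; auto.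
    assert (N1 : 1/m4 <> 1/p).
    { assert (E : 1/m4 - 1/p = (p - m4)/(m4*p)) by (field; lra).
      assert (0 < (p - m4)/(m4*p)) by (apply Rdiv_lt_0_compat; nra). lra. }
    assert (Q2 := Rle_abs (-(L2 m1 m2 m3 m4 p))). rewrite Rabs_Ropp in Q2.
    assert (Q3 := Rle_abs (-(L3 m1 m2 m3 m4 p))). rewrite Rabs_Ropp in Q3.
    exists (1/m4), 0, (1/p), (L2 m1 m2 m3 m4 p), (1/p), (L3 m1 m2 m3 m4 p).
    split; [intro E; injection E; intros; apply N1; auto|].
    split; [intro E; injection E; intros; apply N1; auto|].
    split; [intro E; injection E; intros; apply N23; auto|].
    split; [apply box0; lra|].
    split; [split; [exact Hx| rewrite Rminus_0_r; exact A2]|].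
    split; [split; [exact Hx| rewrite Rminus_0_r; exact A3]|].
    split; [apply E1_equil; lra|].
    split; [apply root_equil; auto; lra|].
    split; [apply root_equil; auto; lra|].
    split.
    { intros x y [Bx By] He. rewrite Rminus_0_r in By.
      apply uniq_equil in He; auto; [|lra].
      destruct He as [[-> ->]|[-> Hq]]; [left; reflexivity|].
      destruct (U y Hq) as [->| ->]; right; [left|right]; reflexivity. }
    split.
    { destruct (E1_jac m1 m2 m3 m4 p) as [T D]; auto. unfold lin_stable. rewrite T, D.
      assert (E : p * (1/m4) - 1 = (p - m4)/m4) by (field; lra).
      assert (0 < (p - m4)/m4) by (apply Rdiv_lt_0_compat; lra). lra. }
    split; apply unstable_E23; auto; lra.
  + intros p Hp. assert (Hpm : p < m4) by lra.
    assert (Hd : Rabs (p-m4) < dd m1 m4 (rr m1 m4)) by (rewrite Rabs_left; lra).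
    destruct (near m1 m2 m3 m4 p (rr m1 m4)) as [Pp _]; auto.
    exists (1/m4), 0.
    split; [apply box0; lra|].
    split; [apply E1_equil; lra|].
    split.
    { intros x y [Bx By] He. rewrite Rminus_0_r in By.
      apply uniq_equil in He; auto; [|lra].
      destruct He as [[-> ->]|[-> Hq]]; [split; reflexivity|].
      exfalso. apply (noroot m1 m2 m3 m4 p y); auto.
      apply Rle_trans with ((1+m1/m4)*rr m1 m4); auto.
      apply Rmult_le_compat_l; lra. }
    destruct (E1_jac m1 m2 m3 m4 p) as [T D]; auto. left. rewrite D. lra.
  + intros e He. set (rho := Rmin e (rr m1 m4)).
    assert (rp : 0 < rho) by (apply Rmin_glb_lt; lra).
    assert (re : rho <= e) by apply Rmin_l.
    assert (rr' : rho <= rr m1 m4) by apply Rmin_r.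
    exists (Rmin (dd m1 m4 (rr m1 m4)) (dd m1 m4 rho)).
    split; [apply Rmin_glb_lt; apply dd_pos; auto|].
    intros p x y [_ Hp] [Bx By] He'.
    destruct (near m1 m2 m3 m4 p (rr m1 m4)) as [Pp _]; auto.
    { eapply Rlt_le_trans; [exact Hp| apply Rmin_l]. }
    destruct (near m1 m2 m3 m4 p rho) as [_ [Hx Hs]]; auto.
    { apply Rle_trans with ((1+m1/m4)*rr m1 m4); auto. apply Rmult_le_compat_l; lra. }
    { eapply Rlt_le_trans; [exact Hp| apply Rmin_r]. }
    rewrite Rminus_0_r in By.
    apply uniq_equil in He'; auto; [|lra].
    destruct He' as [[-> ->]|[-> Hq]]; [apply box0; lra|].
    split; [lra|]. rewrite Rminus_0_r. specialize (Hs y Hq). lra.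
- exists (dd m1 m4 (rr m1 m4)). split; [apply dd_pos; auto|].
  intros p Hp. assert (Hpm : m4 < p) by lra.
  assert (Hd : Rabs (p-m4) < dd m1 m4 (rr m1 m4)) by (rewrite Rabs_pos_eq; lra).
  destruct (near m1 m2 m3 m4 p (rr m1 m4)) as [Pp _]; auto.
  destruct (branch m1 m2 m3 m4 p) as [DP [R2 [R3 [A2 [A3 [N23 U]]]]]]; auto.
  assert (Q2 := Rle_abs (-(L2 m1 m2 m3 m4 p))). rewrite Rabs_Ropp in Q2.
  assert (Q3 := Rle_abs (-(L3 m1 m2 m3 m4 p))). rewrite Rabs_Ropp in Q3.
  split; [exact DP|].
  unfold Eq2, Eq3; simpl fst; simpl snd.
  split; apply root_equil; auto; lra.
Qed.
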